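(* The elements $\{xC_ny\}_{n\in\mathbb N}$ (free products) mutually commute with respect to the $q$-shuffle product $\star$.
   Context: $\mathbb F$ is a field of characteristic zero and $q\in\mathbb F$ is nonzero and not a root of unity; $[n]_q=(q^n-q^{-n})/(q-q^{-1})$. $\mathbb V$ is the free algebra on noncommuting letters $x,y$; a word is a product of letters (the empty word is $1$), and words form a basis. The $q$-shuffle product $\star$ on $\mathbb V$ is the bilinear product with $1\star v=v\star 1=v$ and, for nontrivial words $u=u_1\cdots u_r$, $v=v_1\cdots v_s$ (letters $u_i,v_j$), $u\star v=u_1\bigl((u_2\cdots u_r)\star v\bigr)+v_1\bigl(u\star(v_2\cdots v_s)\bigr)q^{(u_1,v_1)+(u_2,v_1)+\cdots+(u_r,v_1)}$, where juxtaposition is concatenation and $(x,x)=(y,y)=2$, $(x,y)=(y,x)=-2$. Set $\overline x=1$, $\overline y=-1$. A word $u_1\cdots u_n$ is Catalan if $\overline u_1+\cdots+\overline u_i\ge0$ for $1\le i\le n-1$ and $=0$ for $i=n$. For $n\in\mathbb N$, $C_n=\sum u_1u_2\cdots u_{2n}\,[1]_q[1+\overline u_1]_q[1+\overline u_1+\overline u_2]_q\cdots[1+\overline u_1+\cdots+\overline u_{2n}]_q$, summed over all Catalan words of length $2n$ (so $C_0=1$). *)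

(* Defs.v *)
From HB Require Import structures.
From mathcomp Require Import all_boot all_order all_algebra.
Set Implicit Arguments. Unset Strict Implicit. Unset Printing Implicit Defensive.
Import Order.TTheory GRing.Theory Num.Theory.
Local Open Scope ring_scope.

Definition letter := bool.
Definition lx : letter := true.
Definition ly : letter := false.
Definition word := seq letter.

(* The free algebra V on x, y, represented as formal finite linear
   combinations of words (lists of (coefficient, word) pairs); two such
   representations denote the same vector iff all word-coefficients agree. *)
Definition vec (F : fieldType) := seq (F * word).

Definition coef (F : fieldType) (v : vec F) (w : word) : F :=
  \sum_(p <- v | p.2 == w) p.1.

Definition veq (F : fieldType) (a b : vec F) : Prop := forall w, coef a w = coef b w.

Definition pairing (a b : letter) : int := if a == b then (2 : int) else (-2 : int).

Definition lbar (a : letter) : int := if a then (1 : int) else (-1 : int).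

Definition qint (F : fieldType) (q : F) (n : int) : F :=
  (q ^ n - q ^ (- n)) / (q - q^-1).

Definition scalev (F : fieldType) (c : F) (v : vec F) : vec F :=
  [seq (c * p.1, p.2) | p <- v].

Definition prependv (F : fieldType) (a : letter) (v : vec F) : vec F :=
  [seq (p.1, a :: p.2) | p <- v].

(* q-shuffle of two words, following the recursive definition:
   u * v = u1 ((u2..ur) * v) + v1 (u * (v2..vs)) q^{(u1,v1)+...+(ur,v1)}. *)
Fixpoint qshw (F : fieldType) (q : F) (u : word) : word -> vec F :=
  match u with
  | [::] => fun v => [:: (1, v)]
  | a :: u' =>
      fix g (v : word) : vec F :=
        match v with
        | [::] => [:: (1, a :: u')]
        | b :: v' =>
            prependv a (qshw q u' v) ++
            scalev (q ^ (\sum_(c <- a :: u') pairing c b)) (prependv b (g v'))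
        end
  end.

Definition qshuffle (F : fieldType) (q : F) (A B : vec F) : vec F :=
  flatten [seq [seq (a.1 * b.1 * c.1, c.2) | c <- qshw q a.2 b.2]
          | a <- A, b <- B].

Fixpoint allwords (n : nat) : seq word :=
  match n with
  | 0 => [:: [::]]
  | n'.+1 => [seq a :: w | a <- [:: lx; ly], w <- allwords n']
  end.

Definition psum (w : word) (i : nat) : int := \sum_(a <- take i w) lbar a.

Definition catalan (w : word) : bool :=
  [forall i : 'I_(size w), (0 < i)%N ==> (0 <= psum w i)] && (psum w (size w) == 0).

Definition Ccat (F : fieldType) (q : F) (n : nat) : vec F :=
  [seq (\prod_(i < (2 * n).+1) qint q (1 + psum w i), w)
  | w <- allwords (2 * n) & catalan w].

Definition xCy (F : fieldType) (q : F) (n : nat) : vec F :=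
  [seq (p.1, lx :: p.2 ++ [:: ly]) | p <- Ccat q n].

(* Main.v *)
Require Import Defs.
From HB Require Import structures.
From mathcomp Require Import all_boot all_order all_algebra.
From Stdlib Require Import FunctionalExtensionality.
From mathcomp Require Import ring zify.
Import Order.TTheory GRing.Theory Num.Theory.
Local Open Scope ring_scope.
Set Implicit Arguments. Unset Strict Implicit. Unset Printing Implicit Defensive.

Section Shuffle.
Variable F : fieldType.
Variable q : F.
Hypothesis hq0 : q != 0.

Definition fn := word -> F.
Definition fzero : fn := fun _ => 0.
Definition fadd (f g : fn) : fn := fun w => f w + g w.
Definition fscale (c : F) (f : fn) : fn := fun w => c * f w.
Definition dlt : fn := fun w => (w == [::])%:R.
Definition der (a : letter) (f : fn) : fn := fun w => f (a :: w).
Definition wt (u : word) (a : letter) : int := \sum_(c <- u) pairing c a.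
Definition Kt (a : letter) (f : fn) : fn := fun u => q ^ (wt u a) * f u.

Fixpoint star (f g : fn) (w : word) : F :=
  match w with
  | [::] => f [::] * g [::]
  | a :: w' => star (der a f) g w' + star (Kt a f) (der a g) w'
  end.

Lemma star_cons f g a w :
  star f g (a :: w) = star (der a f) g w + star (Kt a f) (der a g) w.
Proof. by []. Qed.

Lemma wt_nil a : wt [::] a = 0.
Proof. by rewrite /wt big_nil. Qed.

Lemma wt_cons c u a : wt (c :: u) a = pairing c a + wt u a.
Proof. by rewrite /wt big_cons. Qed.

Lemma Kt_add a f g : Kt a (fadd f g) = fadd (Kt a f) (Kt a g).
Proof. by apply: functional_extensionality => u; rewrite /Kt /fadd mulrDr. Qed.

Lemma Kt_scale a c f : Kt a (fscale c f) = fscale c (Kt a f).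
Proof. by apply: functional_extensionality => u; rewrite /Kt /fscale mulrCA. Qed.

Lemma Kt_zero a : Kt a fzero = fzero.
Proof. by apply: functional_extensionality => u; rewrite /Kt /fzero mulr0. Qed.

Lemma starDl f1 f2 g w : star (fadd f1 f2) g w = star f1 g w + star f2 g w.
Proof.
elim: w f1 f2 g => [|a w IH] f1 f2 g /=; first by rewrite /fadd mulrDl.
rewrite Kt_add.
have -> : der a (fadd f1 f2) = fadd (der a f1) (der a f2) by [].
by rewrite !IH addrACA.
Qed.

Lemma starDr f g1 g2 w : star f (fadd g1 g2) w = star f g1 w + star f g2 w.
Proof.
elim: w f g1 g2 => [|a w IH] f g1 g2 /=; first by rewrite /fadd mulrDr.
have -> : der a (fadd g1 g2) = fadd (der a g1) (der a g2) by [].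
by rewrite !IH addrACA.
Qed.

Lemma starZl c f g w : star (fscale c f) g w = c * star f g w.
Proof.
elim: w f g => [|a w IH] f g /=; first by rewrite /fscale mulrA.
rewrite Kt_scale.
have -> : der a (fscale c f) = fscale c (der a f) by [].
by rewrite !IH mulrDr.
Qed.

Lemma starZr c f g w : star f (fscale c g) w = c * star f g w.
Proof.
elim: w f g => [|a w IH] f g /=; first by rewrite /fscale mulrCA.
have -> : der a (fscale c g) = fscale c (der a g) by [].
by rewrite !IH mulrDr.
Qed.

Lemma star0l g w : star fzero g w = 0.
Proof.
elim: w g => [|a w IH] g /=; first by rewrite /fzero mul0r.
rewrite Kt_zero. have -> : der a fzero = fzero by [].
by rewrite !IH addr0.
Qed.

Lemma star0r f w : star f fzero w = 0.
Proof.
elim: w f => [|a w IH] f /=; first by rewrite /fzero mulr0.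
have -> : der a fzero = fzero by [].
by rewrite !IH addr0.
Qed.

Lemma star_ext f1 f2 g1 g2 w : f1 =1 f2 -> g1 =1 g2 -> star f1 g1 w = star f2 g2 w.
Proof.
move=> e1 e2; have -> : f1 = f2 by apply: functional_extensionality.
by have -> : g1 = g2 by apply: functional_extensionality.
Qed.

Lemma Kt_dlt a : Kt a dlt = dlt.
Proof.
apply: functional_extensionality => u; rewrite /Kt /dlt.
by case: u => [|c u] /=; rewrite ?wt_nil ?expr0z ?mul1r ?mulr0.
Qed.

Lemma der_dlt a : der a dlt = fzero.
Proof. by []. Qed.

Lemma star_dltl g w : star dlt g w = g w.
Proof.
elim: w g => [|a w IH] g /=; first by rewrite /dlt mul1r.
by rewrite der_dlt star0l add0r Kt_dlt IH.
Qed.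

Lemma star_dltr f w : star f dlt w = f w.
Proof.
elim: w f => [|a w IH] f /=; first by rewrite /dlt mulr1.
by rewrite der_dlt star0r addr0 IH.
Qed.

Lemma der_Kt a b f :
  der b (Kt a f) = fscale (q ^ pairing b a) (Kt a (der b f)).
Proof.
apply: functional_extensionality => u.
by rewrite /der /Kt /fscale wt_cons expfzDr // mulrA.
Qed.

Lemma Kt_comm a b f : Kt a (Kt b f) = Kt b (Kt a f).
Proof. by apply: functional_extensionality => u; rewrite /Kt mulrCA. Qed.

Lemma Kt_star a f g w :
  q ^ (wt w a) * star f g w = star (Kt a f) (Kt a g) w.
Proof.
elim: w f g => [|b w IH] f g /=.
  by rewrite /Kt wt_nil expr0z !mul1r.
rewrite wt_cons expfzDr // -mulrA mulrDr !IH !der_Kt starZl starZr.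
by rewrite Kt_comm mulrDr.
Qed.

Lemma Kt_starE a f g : Kt a (star f g) = star (Kt a f) (Kt a g).
Proof. by apply: functional_extensionality => w; rewrite /Kt Kt_star. Qed.

Lemma star_assoc f g h w : star (star f g) h w = star f (star g h) w.
Proof.
elim: w f g h => [|a w IH] f g h /=; first by rewrite mulrA.
have -> : der a (star f g) = fadd (star (der a f) g) (star (Kt a f) (der a g)) by [].
have -> : der a (star g h) = fadd (star (der a g) h) (star (Kt a g) (der a h)) by [].
by rewrite Kt_starE starDl starDr !IH addrA.
Qed.


Definition dl (u : word) : fn := fun w => (w == u)%:R.

Lemma coefE (v : vec F) w : coef v w = \sum_(p <- v) (if p.2 == w then p.1 else 0).
Proof. by rewrite /coef big_mkcond. Qed.

Lemma coef_cat (a b : vec F) w : coef (a ++ b) w = coef a w + coef b w.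
Proof. by rewrite /coef big_cat. Qed.

Lemma coef_scale k (v : vec F) w : coef (scalev k v) w = k * coef v w.
Proof.
rewrite !coefE /scalev big_map mulr_sumr; apply: eq_bigr => p _ /=.
by case: ifP; rewrite ?mulr0.
Qed.

Lemma coef_prep_nil c (v : vec F) : coef (prependv c v) [::] = 0.
Proof. by rewrite coefE /prependv big_map big1. Qed.

Lemma coef_prep_cons c (v : vec F) a w :
  coef (prependv c v) (a :: w) = (c == a)%:R * coef v w.
Proof.
rewrite !coefE /prependv big_map mulr_sumr; apply: eq_bigr => p _ /=.
rewrite eqseq_cons; case: (c == a); rewrite ?mul1r ?mul0r //.
Qed.

Lemma qshw_nil_l u : qshw q [::] u = [:: (1, u)].
Proof. by []. Qed.
Lemma qshw_nil_r c u : qshw q (c :: u) [::] = [:: (1, c :: u)].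
Proof. by []. Qed.
Lemma qshw_cc c u b v :
  qshw q (c :: u) (b :: v) =
  prependv c (qshw q u (b :: v)) ++
  scalev (q ^ (wt (c :: u) b)) (prependv b (qshw q (c :: u) v)).
Proof. by []. Qed.

Lemma der_dl_nil a : der a (dl [::]) = fzero.
Proof. by []. Qed.
Lemma der_dl_cons a c u : der a (dl (c :: u)) = fscale (c == a)%:R (dl u).
Proof.
apply: functional_extensionality => w; rewrite /der /dl /fscale eqseq_cons eq_sym.
by case: (c == a); rewrite ?mul1r ?mul0r.
Qed.
Lemma Kt_dl a u : Kt a (dl u) = fscale (q ^ wt u a) (dl u).
Proof.
apply: functional_extensionality => w; rewrite /Kt /dl /fscale.
by case: eqP => [->|]; rewrite ?mulr0.
Qed.

Lemma coef_single (c : F) u w : coef [:: (c, u)] w = c * dl u w.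
Proof. by rewrite /coef big_cons big_nil /dl /= eq_sym; case: ifP; rewrite ?addr0 ?mulr1 ?mulr0. Qed.

Lemma dl_nil : dl [::] = dlt.
Proof. by []. Qed.

Lemma coef_qshw w u v : coef (qshw q u v) w = star (dl u) (dl v) w.
Proof.
elim: w u v => [|a w IH] u v.
  case: u => [|c u]; first by rewrite qshw_nil_l coef_single mul1r /= /dl /= mul1r.
  case: v => [|b v]; first by rewrite qshw_nil_r coef_single mul1r /= /dl /= mulr1.
  by rewrite qshw_cc coef_cat coef_scale !coef_prep_nil mulr0 addr0 /= /dl /= mul0r.
case: u => [|c u]; first by rewrite qshw_nil_l coef_single mul1r dl_nil star_dltl.
case: v => [|b v]; first by rewrite qshw_nil_r coef_single mul1r dl_nil star_dltr.
rewrite qshw_cc coef_cat coef_scale !coef_prep_cons !IH star_cons.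
rewrite der_dl_cons Kt_dl der_dl_cons starZl starZr starZl.
case: (eqVneq b a) => [->|nba]; first by rewrite mulrCA.
by rewrite !mul0r mulr0.
Qed.

Lemma starSuml (I : Type) (r : seq I) (c : I -> F) (h : I -> fn) g w :
  star (fun u => \sum_(i <- r) c i * h i u) g w = \sum_(i <- r) c i * star (h i) g w.
Proof.
elim: r => [|i r IH].
  transitivity (star fzero g w); first by apply: star_ext => // u; rewrite big_nil.
  by rewrite star0l big_nil.
rewrite big_cons -IH -starZl -starDl; apply: star_ext => // u.
by rewrite big_cons.
Qed.

Lemma starSumr (I : Type) (r : seq I) (c : I -> F) (h : I -> fn) f w :
  star f (fun u => \sum_(i <- r) c i * h i u) w = \sum_(i <- r) c i * star f (h i) w.
Proof.
elim: r => [|i r IH].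
  transitivity (star f fzero w); first by apply: star_ext => // u; rewrite big_nil.
  by rewrite star0r big_nil.
rewrite big_cons -IH -starZr -starDr; apply: star_ext => // u.
by rewrite big_cons.
Qed.

Lemma coefE2 (v : vec F) u : coef v u = \sum_(p <- v) p.1 * dl p.2 u.
Proof.
rewrite coefE; apply: eq_bigr => p _; rewrite /dl eq_sym.
by case: eqP; rewrite ?mulr1 ?mulr0.
Qed.

Lemma coef_qshuffle (A B : vec F) w :
  coef (qshuffle q A B) w = star (coef A) (coef B) w.
Proof.
rewrite (@star_ext (coef A) (fun u => \sum_(p <- A) p.1 * dl p.2 u)
                   (coef B) (fun u => \sum_(p <- B) p.1 * dl p.2 u)); last first.
- by move=> u; rewrite coefE2.
- by move=> u; rewrite coefE2.
rewrite starSuml /qshuffle coefE big_flatten /= big_flatten big_map.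
apply: eq_bigr => a _; rewrite starSumr big_map mulr_sumr.
apply: eq_bigr => b _; rewrite big_map -coef_qshw coefE mulr_sumr mulr_sumr.
apply: eq_bigr => c _ /=; case: ifP; rewrite ?mulr0 //.
by rewrite mulrA.
Qed.

Hypothesis hq2 : q ^+ 2 != 1.

Lemma qmq_neq0 : q - q^-1 != 0.
Proof.
apply: contraNneq hq2 => h; have : q - q^-1 = 0 by [].
move/eqP; rewrite subr_eq0 => /eqP e.
by rewrite expr2 {2}e mulfV.
Qed.

Lemma qq1 : q * q - 1 != 0.
Proof. by rewrite subr_eq0 -expr2. Qed.

Definition qn (n : nat) : F := qint q n%:Z.

Lemma qnE n : qn n = (q ^+ n - (q ^+ n)^-1) / (q - q^-1).
Proof. by rewrite /qn /qint -exprnN. Qed.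

Lemma qn0 : qn 0 = 0.
Proof. by rewrite qnE expr0 invr1 subrr mul0r. Qed.

Lemma qn1 : qn 1 = 1.
Proof. by rewrite qnE expr1 divff // qmq_neq0. Qed.

Lemma qn_rec n : qn n.+2 = qn 2 * qn n.+1 - qn n.
Proof.
have hq : q != 0 := hq0.
have hm := qmq_neq0.
rewrite !qnE !exprS.
have hqn : q ^+ n != 0 by rewrite expf_neq0.
by field; rewrite hq qq1 hqn.
Qed.

Definition cx (w : word) : nat := count id w.
Definition cy (w : word) : nat := count negb w.

Lemma pairing_xx : pairing lx lx = 2. Proof. by []. Qed.

Lemma wt_x u : wt u lx = 2 * (cx u)%:Z - 2 * (cy u)%:Z.
Proof.
elim: u => [|c u IH]; first by rewrite wt_nil.
rewrite wt_cons IH /cx /cy /=; case: c => /=; rewrite /pairing /=; lia.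
Qed.

Lemma wt_y u : wt u ly = 2 * (cy u)%:Z - 2 * (cx u)%:Z.
Proof.
elim: u => [|c u IH]; first by rewrite wt_nil.
rewrite wt_cons IH /cx /cy /=; case: c => /=; rewrite /pairing /=; lia.
Qed.

Lemma Kt_hom a f (k : int) :
  (forall u, f u != 0 -> wt u a = k) -> Kt a f = fscale (q ^ k) f.
Proof.
move=> h; apply: functional_extensionality => u; rewrite /Kt /fscale.
by have [->|/h ->] := eqVneq (f u) 0; rewrite ?mulr0.
Qed.

Lemma Kt_fix a f : (forall u, f u != 0 -> wt u a = 0) -> Kt a f = f.
Proof.
move=> h; apply: functional_extensionality => u; rewrite /Kt.
by have [->|/h ->] := eqVneq (f u) 0; rewrite ?mulr0 ?expr0z ?mul1r.
Qed.

Fixpoint Yf (n : nat) (w : word) : F :=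
  match w with
  | [::] => (n == 0)%:R
  | c :: w' => qn n * Yf (if c then n.+1 else n.-1) w'
  end.

Lemma Yf_wt n u : Yf n u != 0 -> (cx u + n = cy u)%N.
Proof.
elim: u n => [|c u IH] n /=; first by case: n => [|n] //=; rewrite eqxx.
case: n => [|n]; first by rewrite qn0 mul0r eqxx.
move=> h; have h' : Yf (if c then n.+2 else n) u != 0.
  by apply: contraNneq h => ->; rewrite mulr0.
move: (IH _ h'); rewrite /cx /cy; clear h h'; case: c => /= e; lia.
Qed.

Lemma Kt_Yx n : Kt lx (Yf n) = fscale (q ^ (- (2 * n)%:Z)) (Yf n).
Proof.
apply: Kt_hom => u /Yf_wt e; rewrite wt_x -e PoszD mulrDr; lia.
Qed.

Lemma Kt_Yy n : Kt ly (Yf n) = fscale (q ^ ((2 * n)%:Z)) (Yf n).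
Proof.
apply: Kt_hom => u /Yf_wt e; rewrite wt_y -e PoszD mulrDr; lia.
Qed.

Lemma Y0 : Yf 0 = dlt.
Proof.
apply: functional_extensionality => -[|c u] //=.
by rewrite qn0 mul0r.
Qed.

Definition Af (w : word) : F :=
  match w with
  | [::] => 0
  | c :: w' => if c then Yf 1 w' else 0
  end.

Lemma Af_wt u : Af u != 0 -> cx u = cy u.
Proof.
case: u => [|[] u] /=; rewrite ?eqxx //.
move/Yf_wt; rewrite /cx /cy /=; lia.
Qed.

Lemma Kt_A a : Kt a Af = Af.
Proof.
apply: Kt_fix => u /Af_wt e.
by case: a; rewrite ?wt_x ?wt_y e subrr.
Qed.

Fixpoint alt (b : bool) (w : word) : F :=
  match w with
  | [::] => b%:R
  | c :: w' => if c == b then alt (~~ b) w' else 0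
  end.

Definition Gf := alt true.
Definition Hf := alt false.

Lemma alt_wt b u : alt b u != 0 -> (cx u + (~~ b) = cy u)%N.
Proof.
elim: u b => [|c u IH] b /=; first by case: b; rewrite ?eqxx.
case: (eqVneq c b) => [<-|_]; last by rewrite eqxx.
move/IH; rewrite /cx /cy; case: c => /=; lia.
Qed.

Lemma Kt_G a : Kt a Gf = Gf.
Proof.
apply: Kt_fix => u /alt_wt /= e.
by case: a; rewrite ?wt_x ?wt_y -e addn0 subrr.
Qed.

Lemma Kt_Hx : Kt lx Hf = fscale (q ^ (-2)) Hf.
Proof.
apply: Kt_hom => u /alt_wt /= e; rewrite wt_x -e PoszD; lia.
Qed.

Lemma Kt_Hy : Kt ly Hf = fscale (q ^ 2) Hf.
Proof.
apply: Kt_hom => u /alt_wt /= e; rewrite wt_y -e PoszD; lia.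
Qed.

Lemma der_Gx : der lx Gf = Hf. Proof. by []. Qed.
Lemma der_Gy : der ly Gf = fzero. Proof. by []. Qed.
Lemma der_Hx : der lx Hf = fzero. Proof. by []. Qed.
Lemma der_Hy : der ly Hf = Gf. Proof. by []. Qed.
Lemma der_Ax : der lx Af = Yf 1. Proof. by []. Qed.
Lemma der_Ay : der ly Af = fzero. Proof. by []. Qed.
Lemma der_Yx n : der lx (Yf n) = fscale (qn n) (Yf n.+1). Proof. by []. Qed.
Lemma der_Yy n : der ly (Yf n) = fscale (qn n) (Yf n.-1). Proof. by []. Qed.

Definition Df : fn := fun w => (cy w)%:R * Gf w.
Definition Ef : fn := fun w => (cy w)%:R * Hf w.

Lemma der_Dx : der lx Df = Ef. Proof. by []. Qed.
Lemma der_Dy : der ly Df = fzero.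
Proof. by apply: functional_extensionality => u; rewrite /der /Df /fzero /= mulr0. Qed.
Lemma der_Ex : der lx Ef = fzero.
Proof. by apply: functional_extensionality => u; rewrite /der /Ef /fzero /= mulr0. Qed.
Lemma der_Ey : der ly Ef = fadd Df Gf.
Proof.
apply: functional_extensionality => u; rewrite /der /Ef /fadd /Df /cy /=.
by rewrite add1n -addn1 natrD mulrDl mul1r.
Qed.

Definition lam (k : nat) (f : fn) : fn :=
  fun w => (-1) ^+ (cy w + k + 1) * qn (cy w + k) * f w.

Lemma der_lamx k f : der lx (lam k f) = lam k (der lx f).
Proof. by []. Qed.

Lemma der_lamy k f : der ly (lam k f) = lam k.+1 (der ly f).
Proof.
apply: functional_extensionality => u; rewrite /der /lam /cy /=.
by rewrite ?add1n !addSn !addnS.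
Qed.

Lemma Kt_lam a k f : Kt a (lam k f) = lam k (Kt a f).
Proof. by apply: functional_extensionality => u; rewrite /Kt /lam mulrCA. Qed.

Lemma lam_scale k c f : lam k (fscale c f) = fscale c (lam k f).
Proof. by apply: functional_extensionality => u; rewrite /lam /fscale mulrCA. Qed.

Lemma lam_zero k : lam k fzero = fzero.
Proof. by apply: functional_extensionality => u; rewrite /lam /fzero mulr0. Qed.

Lemma lam2 k f : lam k.+2 f = fadd (fscale (- qn 2) (lam k.+1 f)) (fscale (-1) (lam k f)).
Proof.
apply: functional_extensionality => u; rewrite /lam /fadd /fscale.
rewrite !addnS qn_rec !exprS; ring.
Qed.

Lemma lam0_dlt : lam 0 dlt = fzero.
Proof.
apply: functional_extensionality => u; rewrite /lam /dlt /fzero.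
case: u => [|c u]; last by rewrite mulr0.
by rewrite (_ : cy [::] = 0%N) // addn0 qn0 mulr0 mul0r.
Qed.

Lemma lam1_dlt : lam 1 dlt = dlt.
Proof.
apply: functional_extensionality => u; rewrite /lam /dlt.
case: u => [|c u]; last by rewrite mulr0.
rewrite (_ : cy [::] = 0%N) // add0n qn1 mulr1 addn1 expr2 mulrNN.
by rewrite !mul1r.
Qed.

Lemma Kt_Yx' n : Kt lx (Yf n) = fscale (((q ^+ n) ^+ 2)^-1) (Yf n).
Proof. by rewrite Kt_Yx -exprnN -exprM mulnC. Qed.

Lemma Kt_Yy' n : Kt ly (Yf n) = fscale ((q ^+ n) ^+ 2) (Yf n).
Proof. by rewrite Kt_Yy -exprM mulnC. Qed.

Lemma Kt_Hx' : Kt lx Hf = fscale ((q ^+ 2)^-1) Hf.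
Proof. by rewrite Kt_Hx -exprnN. Qed.

Lemma Kt_Hy' : Kt ly Hf = fscale (q ^+ 2) Hf.
Proof. by rewrite Kt_Hy. Qed.

Definition E k n g := star (lam k (Yf n)) g.

Lemma E_x k n g w :
  E k n g (lx :: w) = qn n * E k n.+1 g w + ((q ^+ n) ^+ 2)^-1 * star (lam k (Yf n)) (der lx g) w.
Proof.
by rewrite /E star_cons der_lamx der_Yx lam_scale starZl Kt_lam Kt_Yx' lam_scale starZl.
Qed.

Lemma E_y k n g w :
  E k n g (ly :: w) = qn n * E k.+1 n.-1 g w + (q ^+ n) ^+ 2 * star (lam k (Yf n)) (der ly g) w.
Proof.
by rewrite /E star_cons der_lamy der_Yy lam_scale starZl Kt_lam Kt_Yy' lam_scale starZl.
Qed.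

Lemma E_xG k n w : E k n Gf (lx :: w) = qn n * E k n.+1 Gf w + ((q ^+ n) ^+ 2)^-1 * E k n Hf w.
Proof. by rewrite E_x der_Gx. Qed.
Lemma E_xH k n w : E k n Hf (lx :: w) = qn n * E k n.+1 Hf w.
Proof. by rewrite E_x der_Hx star0r mulr0 addr0. Qed.
Lemma E_yG k n w : E k n Gf (ly :: w) = qn n * E k.+1 n.-1 Gf w.
Proof. by rewrite E_y der_Gy star0r mulr0 addr0. Qed.
Lemma E_yH k n w : E k n Hf (ly :: w) = qn n * E k.+1 n.-1 Hf w + (q ^+ n) ^+ 2 * E k n Gf w.
Proof. by rewrite E_y der_Hy. Qed.

Lemma E_2 n g w : E 2 n g w = - qn 2 * E 1 n g w - E 0 n g w.
Proof. by rewrite /E lam2 starDl !starZl mulN1r. Qed.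

Lemma E0_0 g w : E 0 0 g w = 0.
Proof. by rewrite /E Y0 lam0_dlt star0l. Qed.
Lemma E1_0 g w : E 1 0 g w = g w.
Proof. by rewrite /E Y0 lam1_dlt star_dltl. Qed.

Definition U n w := E 0 n Gf w + (q ^+ n)^-1 * qn n * E 1 n Gf w
                    + ((q ^+ n) ^+ 2)^-1 * qn n * E 1 n.-1 Hf w.
Definition W n w := E 0 n Hf w - q^-1 * qn n * E 1 n.+1 Gf w
                    - (q ^+ n.+2)^-1 * qn n * E 1 n Hf w.

Ltac abs := repeat match goal with |- context [E ?k ?n ?g ?w] =>
  let e := fresh "e" in set e := E k n g w end.
Ltac fs := abs; rewrite ?qnE ?exprS ?expr0 ?expr1; field; by rewrite ?hq0 ?qq1 ?expf_neq0 ?oner_neq0.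

Lemma R1 n w : U n (lx :: w) = qn n * U n.+1 w + ((q ^+ n) ^+ 2)^-1 * W n w.
Proof.
rewrite /U /W !E_xG !E_xH.
case: n => [|m] /=; first by rewrite ?qn0 ?E0_0; ring.
fs.
Qed.

Lemma R2 n w : U n (ly :: w) = - qn n ^+ 2 * (q ^+ n)^-1 * U n.-1 w
                               - qn n * qn n.-1 * ((q ^+ n) ^+ 2)^-1 * W n.-2 w.
Proof.
rewrite /U /W !E_yG !E_yH !E_2.
case: n => [|[|m]].
- rewrite qn0. ring.
- rewrite /= ?qn0 ?E0_0 ?E1_0. fs.
- rewrite /=. fs.
Qed.

Lemma R3 n w : W n (lx :: w) = qn n * W n.+1 w.
Proof.
rewrite /W !E_xG !E_xH.
case: n => [|m] /=; first by rewrite ?qn0 ?E0_0; ring.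
fs.
Qed.

Lemma R4 n w : W n (ly :: w) = ((q ^+ n) ^+ 2 + q^-1 * qn n * qn n.+1) * U n w
                               + qn n ^+ 2 * (q ^+ n.+2)^-1 * W n.-1 w.
Proof.
rewrite /U /W !E_yG !E_yH !E_2.
case: n => [|m] /=.
  rewrite ?qn0 ?E0_0 ?E1_0; fs.
fs.
Qed.

Definition Ta g := star (lam 0 Af) g.

Lemma Ta_x g w : Ta g (lx :: w) = E 0 1 g w + Ta (der lx g) w.
Proof. by rewrite /Ta star_cons der_lamx der_Ax Kt_lam Kt_A. Qed.

Lemma Ta_y g w : Ta g (ly :: w) = Ta (der ly g) w.
Proof. by rewrite /Ta star_cons der_lamy der_Ay lam_zero star0l add0r Kt_lam Kt_A. Qed.

Definition T w := Ta Gf w - Df w.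
Definition T' w := Ta Hf w - Ef w - q^-1 * E 1 1 Gf w - (q ^+ 2)^-1 * Hf w.

Lemma Hf_x w : Hf (lx :: w) = 0. Proof. by []. Qed.
Lemma Hf_y w : Hf (ly :: w) = Gf w. Proof. by []. Qed.
Lemma Df_x w : Df (lx :: w) = Ef w. Proof. by []. Qed.
Lemma Df_y w : Df (ly :: w) = 0.
Proof. by have := f_equal (fun f => f w) der_Dy. Qed.
Lemma Ef_x w : Ef (lx :: w) = 0.
Proof. by have := f_equal (fun f => f w) der_Ex. Qed.
Lemma Ef_y w : Ef (ly :: w) = Df w + Gf w.
Proof. by have := f_equal (fun f => f w) der_Ey. Qed.

Lemma R5 w : T (lx :: w) = T' w + U 1 w.
Proof.
rewrite /T /T' /U Ta_x der_Gx Df_x /= ?E1_0 ?qn1; fs.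
Qed.

Lemma R6 w : T (ly :: w) = 0.
Proof. by rewrite /T Ta_y der_Gy /Ta star0r Df_y subrr. Qed.

Lemma R7 w : T' (lx :: w) = W 1 w.
Proof.
rewrite /T' /W Ta_x der_Hx /Ta star0r addr0 Ef_x E_xG Hf_x qn1.
rewrite -/(Ta Hf w); rewrite /Ta.
fs.
Qed.

Lemma R8 w : T' (ly :: w) = T w.
Proof.
rewrite /T' /T Ta_y der_Hy Ef_y E_yG Hf_y /= E_2 E1_0 E0_0 qn1.
fs.
Qed.

Lemma U_nil n : U n [::] = 0.
Proof.
rewrite /U /E /= /lam /=.
case: n => [|n] /=; first by rewrite !qn0; ring.
rewrite !mulr0 !mul0r; ring.
Qed.

Lemma W_nil n : W n [::] = 0.
Proof. rewrite /W /E /= /lam /= /Hf /Gf /=; ring. Qed.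

Lemma T_nil : T [::] = 0.
Proof. rewrite /T /Ta /= /lam /= /Df /=; ring. Qed.

Lemma T'_nil : T' [::] = 0.
Proof. rewrite /T' /Ta /E /= /lam /= /Ef /Hf /=; ring. Qed.

Lemma main_id w : [/\ T w = 0, T' w = 0 & forall n, U n w = 0 /\ W n w = 0].
Proof.
elim: w => [|a w [h1 h2 h3]].
  by split; rewrite ?T_nil ?T'_nil // => n; rewrite U_nil W_nil.
case: a.
  split; first by rewrite R5 h2 (h3 1%N).1 addr0.
    by rewrite R7 (h3 1%N).2.
  move=> n; rewrite R1 R3 (h3 n.+1).1 (h3 n).2 (h3 n.+1).2.
  by split; ring.
split; first by rewrite R6.
  by rewrite R8 h1.
move=> n; rewrite R2 R4 (h3 n.-1).1 (h3 n.-2).2 (h3 n).1 (h3 n.-1).2.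
by split; ring.
Qed.

Definition proj (N : nat) (f : fn) : fn := fun w => (cy w == N)%:R * f w.

Lemma der_projx N f : der lx (proj N f) = proj N (der lx f).
Proof. by []. Qed.

Lemma der_projy0 f : der ly (proj 0 f) = fzero.
Proof. by apply: functional_extensionality => u; rewrite /der /proj /fzero /= mul0r. Qed.

Lemma der_projyS N f : der ly (proj N.+1 f) = proj N (der ly f).
Proof. by apply: functional_extensionality => u; rewrite /der /proj /cy /= add1n eqSS. Qed.

Lemma Kt_proj a N f : Kt a (proj N f) = proj N (Kt a f).
Proof. by apply: functional_extensionality => u; rewrite /Kt /proj mulrCA. Qed.

Lemma proj_scale N c f : proj N (fscale c f) = fscale c (proj N f).
Proof. by apply: functional_extensionality => u; rewrite /proj /fscale mulrCA. Qed.

Lemma proj_zero N : proj N fzero = fzero.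
Proof. by apply: functional_extensionality => u; rewrite /proj /fzero mulr0. Qed.

Lemma proj_x N h w : proj N h (lx :: w) = proj N (der lx h) w.
Proof. by []. Qed.
Lemma proj_y0 h w : proj 0 h (ly :: w) = 0.
Proof. by rewrite /proj /= mul0r. Qed.
Lemma proj_yS N h w : proj N.+1 h (ly :: w) = proj N (der ly h) w.
Proof. by rewrite /proj /der /cy /= add1n eqSS. Qed.
Lemma proj_add N a b w : proj N (fadd a b) w = proj N a w + proj N b w.
Proof. by rewrite /proj /fadd mulrDr. Qed.
Lemma der_star a f g : der a (star f g) = fadd (star (der a f) g) (star (Kt a f) (der a g)).
Proof. by []. Qed.

Lemma proj_star N f g w :
  proj N (star f g) w = \sum_(i < N.+1) star (proj i f) (proj (N - i) g) w.
Proof.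
elim: w N f g => [|a w IH] N f g.
  rewrite big_ord_recl /= /proj /= subn0 big1 ?addr0; last first.
    by move=> i _; rewrite !mul0r.
  by rewrite mul1r mulrCA.
case: a.
  rewrite proj_x der_star proj_add !IH -big_split.
  by apply: eq_bigr => i _; rewrite star_cons !der_projx Kt_proj.
case: N => [|N].
  rewrite proj_y0 big_ord_recl big_ord0 addr0 subn0 star_cons der_projy0 star0l add0r.
  by rewrite der_projy0 star0r.
rewrite proj_yS der_star proj_add !IH.
rewrite (eq_bigr (fun i : 'I_N.+2 => star (der ly (proj i f)) (proj (N.+1 - i) g) w
   + star (Kt ly (proj i f)) (der ly (proj (N.+1 - i) g)) w)); last first.
  by move=> i _; rewrite star_cons.
rewrite big_split; congr (_ + _).
  rewrite [RHS]big_ord_recl (_ : nat_of_ord (@ord0 N.+1) = 0%N) // der_projy0 star0l.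
  rewrite [RHS]/= add0r.
  apply: eq_bigr => i _.
  by rewrite /= /bump /= add1n der_projyS subSS.
rewrite [RHS]big_ord_recr (_ : nat_of_ord (@ord_max N.+1) = N.+1) // subnn der_projy0 star0r.
rewrite [RHS]/= addr0.
apply: eq_bigr => i _.
by rewrite Kt_proj subSn ?der_projyS // -ltnS ltn_ord.
Qed.

Definition Gk k := proj k Gf.
Definition Hk k := proj k Hf.
Definition Gp k := if k is k'.+1 then Gk k' else fzero.
Definition Hp k := if k is k'.+1 then Hk k' else fzero.

Lemma dGx k : der lx (Gk k) = Hk k. Proof. by []. Qed.
Lemma dGy k : der ly (Gk k) = fzero.
Proof. by case: k => [|k]; rewrite /Gk ?der_projy0 ?der_projyS ?der_Gy ?proj_zero. Qed.
Lemma dHx k : der lx (Hk k) = fzero.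
Proof. by rewrite /Hk der_projx der_Hx proj_zero. Qed.
Lemma dHy k : der ly (Hk k) = Gp k.
Proof. by case: k => [|k]; rewrite /Hk ?der_projy0 ?der_projyS ?der_Hy. Qed.
Lemma dGpx k : der lx (Gp k) = Hp k.
Proof. by case: k. Qed.
Lemma dGpy k : der ly (Gp k) = fzero.
Proof. by case: k => [|k] //=; rewrite dGy. Qed.
Lemma KG a k : Kt a (Gk k) = Gk k.
Proof. by rewrite /Gk Kt_proj Kt_G. Qed.
Lemma KGp a k : Kt a (Gp k) = Gp k.
Proof. by case: k => [|k] /=; rewrite ?Kt_zero ?KG. Qed.
Lemma KHx k : Kt lx (Hk k) = fscale ((q ^+ 2)^-1) (Hk k).
Proof. by rewrite /Hk Kt_proj Kt_Hx' proj_scale. Qed.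
Lemma KHy k : Kt ly (Hk k) = fscale (q ^+ 2) (Hk k).
Proof. by rewrite /Hk Kt_proj Kt_Hy' proj_scale. Qed.

Lemma Hk_nil k : Hk k [::] = 0.
Proof. by rewrite /Hk /proj /Hf /= mulr0. Qed.
Lemma Hp_nil k : Hp k [::] = 0.
Proof. by case: k => [|k] //=; rewrite Hk_nil. Qed.

Lemma q2V : q ^+ 2 * (q ^+ 2)^-1 = 1.
Proof. by rewrite mulfV // expf_neq0. Qed.

Lemma Gcomm w : forall k l,
  [/\ star (Gk k) (Gk l) w = star (Gk l) (Gk k) w,
      star (Hk k) (Hk l) w = star (Hk l) (Hk k) w,
      star (Hk k) (Gk l) w + star (Gk k) (Hk l) w = star (Hk l) (Gk k) w + star (Gk l) (Hk k) w &
      star (Gp k) (Hk l) w + q ^+ 2 * star (Hk k) (Gp l) w =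
      star (Gp l) (Hk k) w + q ^+ 2 * star (Hk l) (Gp k) w].
Proof.
elim: w => [|a w IH] k l.
  by split; rewrite /= ?Hk_nil ?mulr0 ?mul0r // mulrC.
have GG k' l' : star (Gk k') (Gk l') w = star (Gk l') (Gk k') w by case: (IH k' l').
have HH k' l' : star (Hk k') (Hk l') w = star (Hk l') (Hk k') w by case: (IH k' l').
have GGp k' l' : star (Gp k') (Gk l') w = star (Gk l') (Gp k') w.
  by case: k' => [|k'] /=; [rewrite star0l star0r | apply: GG].
have GpGp k' l' : star (Gp k') (Gp l') w = star (Gp l') (Gp k') w.
  by case: k' => [|k']; case: l' => [|l'] /=; rewrite ?star0l ?star0r //; apply: GG.
have HHp k' l' : star (Hp k') (Hk l') w = star (Hk l') (Hp k') w.
  by case: k' => [|k'] /=; [rewrite star0l star0r | apply: HH].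
case: a.
  rewrite !star_cons !dGx !dHx !dGpx !KG !KGp !KHx !star0l !star0r !starZl !add0r !addr0.
  split.
  - by case: (IH k l).
  - by [].
  - by rewrite HH.
  - by rewrite !mulrA q2V !mul1r (HHp k l) (HHp l k) addrC.
rewrite !star_cons !dGy !dHy !dGpy !KG !KGp !KHy !star0l !star0r !starZl !add0r !addr0.
split.
- by [].
- by case: (IH k l).
- by rewrite (GGp k l) (GGp l k) addrC.
- by rewrite (GpGp k l).
Qed.

Lemma T_zero w : Ta Gf w = Df w.
Proof. by case: (main_id w) => h _ _; apply/eqP; rewrite -subr_eq0 -/(T w) h. Qed.

Lemma proj_lamA i : proj i (lam 0 Af) = fscale ((-1) ^+ (i + 1) * qn i) (proj i Af).
Proof.
apply: functional_extensionality => u; rewrite /proj /lam /fscale addn0.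
by case: eqP => [->|_]; rewrite ?mul0r ?mulr0 // !mul1r mulrA.
Qed.

Lemma newton N w :
  \sum_(i < N.+1) ((-1) ^+ (i + 1) * qn i) * star (proj i Af) (Gk (N - i)) w = N%:R * Gk N w.
Proof.
have := f_equal (fun f => proj N f w)
  (functional_extensionality _ _ T_zero : star (lam 0 Af) Gf = Df).
rewrite /= proj_star => H.
rewrite (eq_bigr (fun i : 'I_N.+1 => star (proj i (lam 0 Af)) (proj (N - i) Gf) w)); last first.
  by move=> i _; rewrite proj_lamA starZl.
rewrite H /proj /Df /Gk /proj.
case: eqP => [->|_]; rewrite ?mul0r ?mulr0 // mul1r.
by rewrite (_ : true%:R = 1 :> F) ?mul1r.
Qed.

Definition Comm (h f : fn) := forall w, star f h w = star h f w.

Lemma Comm_sym h f : Comm h f -> Comm f h.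
Proof. by move=> c w; rewrite c. Qed.

Lemma Comm_zero h : Comm h fzero.
Proof. by move=> w; rewrite star0l star0r. Qed.

Lemma Comm_add h f g : Comm h f -> Comm h g -> Comm h (fadd f g).
Proof. by move=> c1 c2 w; rewrite starDl starDr c1 c2. Qed.

Lemma Comm_scale h c f : Comm h f -> Comm h (fscale c f).
Proof. by move=> c1 w; rewrite starZl starZr c1. Qed.

Lemma Comm_sum h (I : Type) (r : seq I) (c : I -> F) (hs : I -> fn) :
  (forall i, Comm h (hs i)) -> Comm h (fun w => \sum_(i <- r) c i * hs i w).
Proof.
move=> hc w; rewrite starSuml starSumr; apply: eq_bigr => i _.
by rewrite hc.
Qed.

Lemma Comm_star h f g : Comm h f -> Comm h g -> Comm h (star f g).
Proof.
move=> c1 c2 w.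
have e1 : star g h = star h g by apply: functional_extensionality.
have e2 : star f h = star h f by apply: functional_extensionality.
by rewrite star_assoc e1 -star_assoc e2 star_assoc.
Qed.

Hypothesis hqk : forall k, (0 < k)%N -> q ^+ k != 1.

Lemma qn_neq0 N : (0 < N)%N -> qn N != 0.
Proof.
move=> hN; rewrite qnE mulf_eq0 invr_eq0 negb_or qmq_neq0 andbT subr_eq0.
have h2 : (0 < N + N)%N by rewrite addn_gt0 hN.
have hn : q ^+ N != 0 by rewrite expf_neq0.
apply/eqP => e; move: (hqk h2).
by rewrite exprD {2}e mulfV // eqxx.
Qed.

Definition An i := proj i Af.
Definition cN i : F := (-1) ^+ (i + 1) * qn i.

Lemma cN_neq0 N : (0 < N)%N -> cN N != 0.
Proof. by move=> hN; rewrite /cN mulf_neq0 ?signr_eq0 ?qn_neq0. Qed.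

Lemma size_c u : size u = (cx u + cy u)%N.
Proof. by rewrite /cx /cy -(count_predC id) . Qed.

Lemma Gk0 : Gk 0 = dlt.
Proof.
apply: functional_extensionality => u; rewrite /Gk /proj /dlt /Gf.
case: u => [|c u]; first by rewrite mul1r.
rewrite (_ : ((c :: u) == [::]) = false) //.
have [->|/alt_wt e2] := eqVneq (alt true (c :: u)) 0; first by rewrite mulr0.
have e3 : cx (c :: u) = cy (c :: u) by rewrite -e2 addn0.
have h1 := size_c (c :: u).
have h3 : size (c :: u) = (size u).+1 by [].
have hc : (cy (c :: u) == 0%N) = false.
  by apply/negbTE/eqP => h; lia.
by rewrite hc mul0r.
Qed.

Lemma An0 : An 0 = fzero.
Proof.
apply: functional_extensionality => u; rewrite /An /proj /fzero.
case: u => [|[] u]; rewrite /Af ?mulr0 //.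
have [->|/Yf_wt e] := eqVneq (Yf 1 u) 0; first by rewrite mulr0.
have hc : (cy (true :: u) == 0%N) = false.
  by rewrite (_ : cy (true :: u) = cy u) // -e addn1.
by rewrite hc mul0r.
Qed.

Lemma An_rep N : (0 < N)%N ->
  An N = fscale (cN N)^-1 (fadd (fscale N%:R (Gk N))
            (fun w => \sum_(i < N) (- cN i) * star (An i) (Gk (N - i)) w)).
Proof.
move=> hN; apply: functional_extensionality => w.
have := newton N w; rewrite big_ord_recr /= subnn Gk0 star_dltr => e.
rewrite /fscale /fadd -e.
rewrite (_ : \sum_(i < N) - cN i * star (An i) (Gk (N - i)) w =
             - \sum_(i < N) (-1) ^+ (i + 1) * qn i * star (proj i Af) (Gk (N - i)) w); last first.
  by rewrite -sumrN; apply: eq_bigr => i _; rewrite mulNr.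
rewrite addrAC subrr add0r -/(cN N) mulrA mulVf ?mul1r //.
exact: cN_neq0.
Qed.

Lemma claim1 N k : Comm (Gk k) (An N).
Proof.
elim/ltn_ind: N k => N IH k.
case: N IH => [|N] IH; first by rewrite An0; apply: Comm_zero.
rewrite [An N.+1]An_rep //; apply: Comm_scale; apply: Comm_add.
  by apply: Comm_scale => w; case: (Gcomm w k N.+1).
apply: Comm_sum => i; apply: Comm_star; first exact: IH.
by move=> w; case: (Gcomm w k (N.+1 - i)).
Qed.

Lemma claim2 N m : Comm (An m) (An N).
Proof.
elim/ltn_ind: N m => N IH m.
case: N IH => [|N] IH; first by rewrite An0; apply: Comm_zero.
rewrite [An N.+1]An_rep //; apply: Comm_scale; apply: Comm_add.
  by apply: Comm_scale; apply: Comm_sym; apply: claim1.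
apply: Comm_sum => i; apply: Comm_star; first exact: IH.
apply: Comm_sym; exact: claim1.
Qed.

Lemma sumcat (I : Type) (s1 s2 : seq I) (G : I -> F) :
  \sum_(u <- s1 ++ s2) G u = \sum_(u <- s1) G u + \sum_(u <- s2) G u.
Proof. by rewrite big_cat. Qed.

Lemma sum_allwords (G : word -> F) n u0 :
  \sum_(u <- allwords n) (if u == u0 then G u else 0) = if size u0 == n then G u0 else 0.
Proof.
elim: n G u0 => [|n IH] G u0.
  by rewrite /= big_cons big_nil addr0; case: u0.
rewrite [allwords _]/= cats0 sumcat !big_map.
case: u0 => [|b u1].
  by rewrite !big1 ?addr0.
rewrite /= eqSS.
rewrite (eq_bigr (fun w => if w == u1 then (if lx == b then G (lx :: w) else 0) else 0)); last first.
  by move=> w _; rewrite eqseq_cons; case: (lx == b); case: (w == u1).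
rewrite [X in _ + X](eq_bigr (fun w => if w == u1 then (if ly == b then G (ly :: w) else 0) else 0)); last first.
  by move=> w _; rewrite eqseq_cons; case: (ly == b); case: (w == u1).
rewrite (IH (fun w => if lx == b then G (lx :: w) else 0)).
rewrite (IH (fun w => if ly == b then G (ly :: w) else 0)).
by case: b; case: (size u1 == n); rewrite ?addr0 ?add0r.
Qed.

Fixpoint Pn (k : nat) (u : word) : F :=
  match u with
  | [::] => qn k * (k == 1)%:R
  | c :: u' => qn k * Pn (if c then k.+1 else k.-1) u'
  end.

Lemma Yf_rcons k u : Yf k (rcons u ly) = Pn k u.
Proof.
elim: u k => [|c u IH] k /=; last by rewrite IH.
by case: k => [|[|k]] /=; rewrite ?qn0 ?mul0r ?mulr0.
Qed.

Lemma Yf_rcons_x k u : Yf k (rcons u lx) = 0.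
Proof.
elim: u k => [|c u IH] k /=; last by rewrite IH mulr0.
by rewrite mulr0.
Qed.

Lemma psum0 u : psum u 0 = 0.
Proof. by rewrite /psum take0 big_nil. Qed.

Lemma psumS c u i : psum (c :: u) i.+1 = lbar c + psum u i.
Proof. by rewrite /psum /= big_cons. Qed.

Lemma psum_end u : psum u (size u) = (cx u)%:Z - (cy u)%:Z.
Proof.
elim: u => [|c u IH]; first by rewrite psum0.
rewrite psumS IH /cx /cy /lbar; case: c => /=; lia.
Qed.

Lemma qint0 : qint q (Posz 0) = 0.
Proof. exact: qn0. Qed.

Lemma Pn_prod k u :
  Pn k u = (\prod_(i < (size u).+1) qint q (k%:Z + psum u i)) *
           ((k%:Z + psum u (size u)) == 1)%:R.
Proof.
elim: u k => [|c u IH] k.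
  by rewrite /= big_ord_recl big_ord0 mulr1 psum0 addr0.
rewrite [Pn _ _]/= IH [in RHS]big_ord_recl psum0 addr0 [size (c :: u)]/= psumS.
case: k => [|k]; first by rewrite qn0 qint0 !mul0r.
rewrite mulrA; congr (_ * _ * _).
  apply: eq_bigr => i _; rewrite /= /bump /= add1n psumS; congr (qint q _).
  by case: c; rewrite /lbar /=; lia.
by case: c; rewrite /lbar /=; congr ((_ == _)%:R); lia.
Qed.

Lemma Pn_zero u k i : (i <= size u)%N -> k%:Z + psum u i <= 0 -> Pn k u = 0.
Proof.
elim: u k i => [|c u IH] k i.
  rewrite leqn0 => /eqP ->; rewrite psum0 addr0 => hk.
  have -> : k = 0%N by lia.
  by rewrite /= qn0 mul0r.
case: k => [|k]; first by rewrite /= qn0 mul0r.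
case: i => [|i]; first by rewrite psum0 addr0 => _ hk; exfalso; lia.
rewrite ltnS psumS => hi hlt.
rewrite /= (IH _ i) ?mulr0 //.
by move: hlt; case: c; rewrite /lbar /=; lia.
Qed.

Lemma coef_xCy_sum n w :
  coef (xCy q n) w =
  \sum_(u <- allwords (2 * n)) (if catalan u && (lx :: rcons u ly == w)
      then \prod_(i < (2 * n).+1) qint q (1 + psum u i) else 0).
Proof.
rewrite coefE /xCy /Ccat !big_map big_filter big_mkcond /=.
apply: eq_bigr => u _; rewrite cats1.
by case: (catalan u); case: (_ == w).
Qed.

Lemma coef_xCy n w : coef (xCy q n) w = An n.+1 w.
Proof.
rewrite coef_xCy_sum /An /proj.
case: w => [|[] v]; rewrite /Af ?mulr0; first by rewrite big1 // => u _; rewrite andbF.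
- case/lastP: v => [|v c].
    rewrite big1 ?mulr0 // => u _.
    by case: u => [|c u]; rewrite /= ?andbF.
  case: c.
    rewrite Yf_rcons_x mulr0 big1 // => u _.
    by rewrite eqseq_cons /= eqseq_rcons andbF andbF.
  rewrite Yf_rcons.
  rewrite (eq_bigr (fun u => if u == v then
       (if catalan u then \prod_(i < (2 * n).+1) qint q (1 + psum u i) else 0) else 0)); last first.
    move=> u _; rewrite eqseq_cons /= eqseq_rcons eqxx andbT.
    by case: (catalan u); case: (u == v).
  rewrite sum_allwords.
  have hcy : cy (lx :: rcons v ly) = (cy v).+1.
    by rewrite /cy /= -cats1 count_cat /= addn1.
  rewrite hcy eqSS.
  have [hP|hP] := eqVneq (Pn 1 v) 0.
    rewrite hP mulr0; case hs: (size v == 2 * n); case hc: (catalan v) => //.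
    move: hc hP; rewrite /catalan Pn_prod (eqP hs) => /andP [_ /eqP ->].
    by rewrite addr0 eqxx mulr1.
  have hend : psum v (size v) = 0.
    apply/eqP; apply: contraNT hP => hne; rewrite Pn_prod.
    by rewrite (_ : (1%:Z + _ == 1) = false) ?mulr0 //; apply/negbTE; move: hne; lia.
  have hxy : cx v = cy v by move: hend; rewrite psum_end; lia.
  have hs := size_c v.
  case: (eqVneq (size v) (2 * n)) => hsz.
    have -> : cy v = n by lia.
    rewrite eqxx mul1r.
    case hc: (catalan v).
      by rewrite Pn_prod hend addr0 eqxx mulr1 hsz.
    move: hc; rewrite /catalan hend eqxx andbT => /negbT.
    rewrite negb_forall => /existsP [i]; rewrite negb_imply => /andP [hi0 hi].
    have hle : (i <= size v)%N := ltnW (ltn_ord i).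
    have hneg : 1%:Z + psum v i <= 0 by move: hi; rewrite -ltNge; lia.
    by rewrite (Pn_zero hle hneg).
  have -> : (cy v == n) = false by apply/negbTE/eqP => e; apply: (negP hsz); apply/eqP; lia.
  by rewrite mul0r.
- by rewrite big1 // => u _; rewrite eqseq_cons /= andbF.
Qed.

End Shuffle.

Theorem corollary8p4 (F : fieldType) (q : F)
  (hchar : [pchar F] =i pred0)
  (hq0 : q != 0)
  (hq : forall k : nat, (0 < k)%N -> q ^+ k != 1)
  (n m : nat) :
  veq (qshuffle q (xCy q n) (xCy q m)) (qshuffle q (xCy q m) (xCy q n)).
Proof.
move=> w.
have hq2 : q ^+ 2 != 1 by apply: hq.
rewrite !coef_qshuffle.
rewrite (@star_ext _ q (coef (xCy q n)) (An q n.+1) (coef (xCy q m)) (An q m.+1)); last first.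
- by move=> u; rewrite (coef_xCy hq0 hq2).
- by move=> u; rewrite (coef_xCy hq0 hq2).
rewrite (@star_ext _ q (coef (xCy q m)) (An q m.+1) (coef (xCy q n)) (An q n.+1)); last first.
- by move=> u; rewrite (coef_xCy hq0 hq2).
- by move=> u; rewrite (coef_xCy hq0 hq2).
exact: (claim2 hq0 hq2 hq).
Qed.
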